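(* Let $a,b\ge 2$ be integers and let $G=\mathrm{Sym}(a)\wr\mathrm{Sym}(b)$ with its imprimitive action on $ab$ points. Then \[ \mathbf{m}(G)=\begin{cases} a+b-2 & \text{if } a=3 \text{ and } b \text{ is odd, or } b=3 \text{ and } a \text{ is odd},\\ a+b-1 & \text{otherwise.}\end{cases} \] In particular, if $G$ is a transitive imprimitive permutation group with a block system consisting of $b$ blocks each containing $a$ points, then $\mathbf{m}(G)\le a+b-1$.
   Context: The imprimitive action of $\mathrm{Sym}(a)\wr\mathrm{Sym}(b)$ is on $[a]\times[b]$, with the base group $\mathrm{Sym}(a)^b$ acting coordinatewise within the blocks $[a]\times\{j\}$ and $\mathrm{Sym}(b)$ permuting the blocks. For a transitive permutation group $X$ on a finite set $\Omega$ with $|\Omega|\ge2$, a subset $A\subseteq\Omega$ is self-separable for $X$ if there exists $x\in X$ with $A\cap A^x=\emptyset$; $\mathbf{m}(X)$ is the minimum cardinality of a subset of $\Omega$ that is not self-separable for $X$. *)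

(* Defs.v *)
From mathcomp Require Import all_boot all_fingroup.
Set Implicit Arguments. Unset Strict Implicit. Unset Printing Implicit Defensive.
Local Open Scope group_scope.

Definition self_separable (T : finType) (X : {set {perm T}}) (A : {set T}) : bool :=
  [exists x in X, A :&: [set x y | y in A] == set0].

(* m(X): minimum cardinality of a subset that is not self-separable.
   (The default #|T| is attained by setT, which is never self-separable
   when T is nonempty.) *)
Definition mX (T : finType) (X : {set {perm T}}) : nat :=
  \big[minn/#|T|]_(A : {set T} | ~~ self_separable X A) #|A|.

Definition wreath_imprim (a b : nat) : {set {perm ('I_a * 'I_b)}} :=
  [set p : {perm ('I_a * 'I_b)} |
     [exists f : {ffun 'I_b -> {perm 'I_a}}, exists s : {perm 'I_b},
        [forall x : 'I_a * 'I_b, p x == (f x.2 x.1, s x.2)]]].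

Definition block_system (T : finType) (G : {set {perm T}}) (P : {set {set T}})
  (a b : nat) : Prop :=
  [/\ partition P [set: T], #|P| = b, (forall B, B \in P -> #|B| = a)
    & (forall g B, g \in G -> B \in P -> [set g y | y in B] \in P)].

(* Main.v *)
Require Import Defs.
From mathcomp Require Import all_boot all_fingroup.
From mathcomp Require Import zify.

Lemma arith_pp (a b p x : nat) : 2 <= a -> 2 <= b -> b < p + p -> a < x + x ->
  a + b - 2 <= p * x /\
  (~~ (((a == 3) && odd b) || ((b == 3) && odd a)) -> a + b - 1 <= p * x).
Proof.
move=> a2 b2 hp hx.
have ea := odd_double_half a; have eb := odd_double_half b.
have [a3|a3] := eqVneq a 3.
  subst a. split; first nia. rewrite /=. case ob: (odd b) eb => /= eb; first by [].
  move=> _; nia.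
have [b3|b3] := eqVneq b 3.
  subst b. split; first nia. rewrite /= ?orbF. case oa: (odd a) ea => /= ea; first by [].
  move=> _; nia.
rewrite /=.
have [a2'|a2'] := eqVneq a 2. subst a; split; nia.
have [b2'|b2'] := eqVneq b 2. subst b; split; nia.
have [a4|a4] := eqVneq a 4. subst a; split; nia.
have [b4|b4] := eqVneq b 4. subst b; split; nia.
split; nia.
Qed.
Lemma arith_pq (a b p q x y : nat) : 2 <= a -> 2 <= b -> p < q -> q <= b -> b < p + q ->
  y <= x -> x <= a -> a < x + y -> a + b - 1 <= y * q + (x - y) * p.
Proof.
move=> a2 b2 pq qb hpq yx xa hxy.
have y1 : 1 <= y by lia.
have x2 : 2 <= x by lia.
have -> : y * q + (x - y) * p = (x + y) + (p - 1) * x + (q - p - 1) * y.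
  have -> : q = p + (q - p - 1) + 1 by lia.
  have -> : x = y + (x - y) by lia.
  have p1 : 1 <= p by lia.
  have -> : p = 1 + (p - 1) by lia. nia.
have [p1|p1] := eqVneq p 1.
  subst p. have -> : q = b by lia. nia.
nia.
Qed.
Lemma sum_ind (I : finType) (P : pred I) (y : nat) :
  \sum_i (y * P i) = #|[set i | P i]| * y.
Proof.
rewrite -sum_nat_cond_const [RHS]big_mkcond /=; apply: eq_bigr => i _.
by case: (P i); rewrite ?muln1 ?muln0.
Qed.

Lemma sum_bound (I : finType) (c : I -> nat) a x y :
  2 <= a -> 2 <= #|I| -> (forall i, c i <= a) -> a < x + y -> y <= x ->
  #|I| < #|[set i | x <= c i]| + #|[set i | y <= c i]| ->
  a + #|I| - 2 <= \sum_i c i /\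
  (~~ (((a == 3) && odd #|I|) || ((#|I| == 3) && odd a)) -> a + #|I| - 1 <= \sum_i c i).
Proof.
move=> a2 b2 ca hxy yx hpq.
set p := #|[set i | x <= c i]|; set q := #|[set i | y <= c i]|.
have pq : p <= q.
  apply: subset_leq_card; apply/subsetP => i; rewrite !inE => h; exact: leq_trans yx h.
have qb : q <= #|I| by apply: max_card.
have p0 : 0 < p by lia.
have xa : x <= a.
  move: p0; rewrite card_gt0 => /set0Pn [i]; rewrite inE => h.
  exact: leq_trans h (ca i).
have hs : y * q + (x - y) * p <= \sum_i c i.
  rewrite mulnC [(x - y) * p]mulnC -!sum_ind -big_split /=.
  apply: leq_sum => i _.
  case: (leqP x (c i)) => h1; case: (leqP y (c i)) => h2 /=; lia.
have [epq|npq] := eqVneq p q.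
  have hp2 : #|I| < p + p by lia.
  have hx2 : a < x + x by lia.
  have [h1 h2] := arith_pp a #|I| p x a2 b2 hp2 hx2.
  have e : y * q + (x - y) * p = p * x by rewrite -epq; nia.
  split; first lia. by move=> /h2; lia.
have pq' : p < q by rewrite ltn_neqAle npq pq.
have h := arith_pq a #|I| p q x y a2 b2 pq' qb hpq yx xa hxy.
split; lia.
Qed.
Lemma cnt_D1 (I : finType) (D : {set I}) (P : pred I) j : j \in D ->
  #|[set i in D | P i]| = P j + #|[set i in D :\ j | P i]|.
Proof.
move=> jD; rewrite (cardsD1 j) !inE jD /=; congr (_ + _).
by apply: eq_card => i; rewrite !inE andbA.

Qed.

Arguments cnt_D1 {I D} P {j}.

Lemma matching (I : finType) (c : I -> nat) (a : nat) n (D : {set I}) :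
  #|D| = n ->
  (forall x y, a < x + y -> #|[set i in D | x <= c i]| + #|[set i in D | y <= c i]| <= #|D|) ->
  exists s : {perm I}, [/\ forall i, i \in D -> c i + c (s i) <= a,
                          forall i, i \notin D -> s i = i &
                          forall i, i \in D -> s i \in D].
Proof.
elim/ltn_ind: n D => n IH D hD H.
have [->|[j0 j0D]] := set_0Vmem D.
  by exists 1%g; split => i; rewrite ?inE ?perm1.
case: (arg_maxnP c j0D) => j jD jmax.
have {}jD : j \in D := jD.
have {}jmax : forall i, i \in D -> c i <= c j := jmax.
have [DJ|[k0 k0D]] := set_0Vmem (D :\ j).
  have Dj : forall i, i \in D -> i = j.
    move=> i iD; apply/eqP; apply/negPn/negP => ne.
    by have := in_set0 i; rewrite -DJ !inE ne iD.
  have cD : #|D| = 1 by rewrite (cardsD1 j D) jD DJ cards0.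
  exists 1%g; split => i; rewrite ?perm1 //.
  move=> /Dj ->; rewrite leqNgt; apply/negP => /H.
  rewrite cD (cnt_D1 _ jD) leqnn /=; lia.
case: (arg_minnP c k0D) => k kD kmin.
have {}kD : k \in D :\ j := kD.
have {}kmin : forall i, i \in D :\ j -> c k <= c i := kmin.
have kj : k != j by move: kD; rewrite !inE => /andP[].
have kD' : k \in D by move: kD; rewrite !inE => /andP[].
have Mm : c j + c k <= a.
  rewrite leqNgt; apply/negP => /H.
  have -> : [set i in D | c k <= c i] = D.
    apply/setP => i; rewrite inE; case iD: (i \in D) => //=.
    have [->|ij] := eqVneq i j; first exact: jmax.
    by apply: kmin; rewrite !inE ij iD.
  rewrite (cnt_D1 _ jD) leqnn /=; lia.
set D' := D :\ j :\ k.
have cD : #|D| = #|D'| + 2.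
  by rewrite /D' (cardsD1 j D) jD (cardsD1 k (D :\ j)) kD; lia.
have mM : c k <= c j by apply: jmax.
have [s' [h1 h2 h3]] : exists s' : {perm I}, [/\ forall i, i \in D' -> c i + c (s' i) <= a,
                          forall i, i \notin D' -> s' i = i &
                          forall i, i \in D' -> s' i \in D'].
  apply: (IH #|D'|); first lia; first by [].
  move=> x y hxy.
  have Ex := cnt_D1 (fun i => x <= c i) jD.
  have Ey := cnt_D1 (fun i => y <= c i) jD.
  rewrite (cnt_D1 _ kD) in Ex; rewrite (cnt_D1 _ kD) in Ey.
  have := H x y hxy.
  have X1 : #|[set i in D' | x <= c i]| <= #|D'|.
    by apply: subset_leq_card; apply/subsetP => i; rewrite inE => /andP[].
  have Y1 : #|[set i in D' | y <= c i]| <= #|D'|.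
    by apply: subset_leq_card; apply/subsetP => i; rewrite inE => /andP[].
  have Z : forall z, c j < z -> #|[set i in D' | z <= c i]| = 0.
    move=> z hz; apply/eqP; rewrite cards_eq0; apply/eqP/setP => i; rewrite in_set in_set0.
    apply/negP => /andP[iD' hi].
    have iD : i \in D by move: iD'; rewrite /D' !inE => /and3P[].
    by have := jmax i iD; lia.
  rewrite -/D' in Ex Ey.
  rewrite Ex Ey cD /=.
  case: (leqP x (c j)) => hxj; last by rewrite (Z x hxj); lia.
  case: (leqP y (c j)) => hyj; last by rewrite (Z y hyj); lia.
  case: (leqP x (c k)) => hxk; case: (leqP y (c k)) => hyk /=; lia.
exists (s' * tperm j k)%g; split => i.
- move=> iD; rewrite permM.
  have [->|ij] := eqVneq i j.
    by rewrite h2 ?tpermL // /D' !inE eqxx andbF.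
  have [->|ik] := eqVneq i k.
    rewrite h2; last by rewrite /D' !inE eqxx.
    by rewrite tpermR addnC.
  have iD' : i \in D' by rewrite /D' !inE ij ik iD.
  have := h3 _ iD'; rewrite /D' !inE => /and3P[sk sj _].
  by rewrite tpermD 1?eq_sym //; apply: h1.
- move=> iD; have iD' : i \notin D' by rewrite /D' !inE (negbTE iD) !andbF.
  rewrite permM h2 // tpermD //; apply/eqP => e; subst i; by rewrite ?kD' ?jD in iD.
- move=> iD; rewrite permM.
  have [->|ij] := eqVneq i j.
    by rewrite h2 ?tpermL // /D' !inE eqxx andbF.
  have [->|ik] := eqVneq i k.
    by rewrite h2 ?tpermR // /D' !inE eqxx.
  have iD' : i \in D' by rewrite /D' !inE ij ik iD.
  have := h3 _ iD'; rewrite /D' !inE => /and3P[sk sj sD].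
  by rewrite tpermD 1?eq_sym.
Qed.

Lemma card_lt (n h : nat) : h <= n -> #|[set i : 'I_n | i < h]| = h.
Proof.
move=> hn.
have -> : [set i : 'I_n | i < h] = [set widen_ord hn i | i in 'I_h].
  apply/setP => i; rewrite inE; apply/idP/imsetP.
    by move=> ih; exists (Ordinal ih) => //; apply: val_inj.
  by case=> j _ ->; rewrite /= ltn_ord.
rewrite card_imset ?card_ord //.
by move=> x y /(congr1 val) /= e; apply: val_inj.
Qed.

Lemma card_as_sum (T : finType) (A : {pred T}) : #|A| = \sum_x ((x \in A) : nat).
Proof.
rewrite -sum1_card big_mkcond /=; apply: eq_bigr => x _; by case: (x \in A).
Qed.

Definition col (a b : nat) (A : {set 'I_a * 'I_b}) (j : 'I_b) : {set 'I_a} :=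
  [set i | (i, j) \in A].
Arguments col {a b} A j.

Lemma cardA (a b : nat) (A : {set 'I_a * 'I_b}) : #|A| = \sum_j #|col A j|.
Proof.
rewrite card_as_sum.
transitivity (\sum_j \sum_i (((i, j) \in A) : nat)); last first.
  by apply: eq_bigr => j _; rewrite card_as_sum; apply: eq_bigr => i _; rewrite inE.
rewrite exchange_big /= pair_big /=.
by apply: eq_bigr => [[i j]] _ /=.
Qed.

Lemma blockperm (T : finType) n : forall U V : {set T}, #|U| = n -> #|U| + #|V| <= #|T| ->
  exists f : {perm T}, forall i, i \in U -> f i \notin V.
Proof.
elim: n => [|n IH] U V hU hUV.
  exists 1%g => i iU; exfalso; move: hU; rewrite (cardsD1 i) iU /=; lia.
have [U0|[u uU]] := set_0Vmem U; first by move: hU; rewrite U0 cards0.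

have hU0 : #|U :\ u| = n by move: hU; rewrite (cardsD1 u) uU; lia.
have h0 : #|U :\ u| + #|V| <= #|T| by move: hUV; rewrite (cardsD1 u U) uU; lia.
have [f0 hf0] := IH (U :\ u) V hU0 h0.
case fu: (f0 u \in V); last first.
  exists f0 => i iU; have [->|iu] := eqVneq i u; first by rewrite fu.
  by apply: hf0; rewrite !inE iu.
have : 0 < #|~: (V :|: [set f0 i | i in U :\ u])|.
  have := cardsC (V :|: [set f0 i | i in U :\ u]).
  have := leq_card_setU V [set f0 i | i in U :\ u]; case => h1 _.
  have : #|[set f0 i | i in U :\ u]| <= #|U :\ u| := leq_imset_card _ _.
  move: hUV; rewrite (cardsD1 u U) uU /=; lia.
rewrite card_gt0 => /set0Pn [w]; rewrite !inE negb_or => /andP[wV wI].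
exists (f0 * tperm (f0 u) w)%g => i iU; rewrite permM.
have [->|iu] := eqVneq i u; first by rewrite tpermL.
have iU0 : i \in U :\ u by rewrite !inE iu.
rewrite tpermD; first exact: hf0.
  by apply/eqP => /perm_inj e; move: iu; rewrite e eqxx.
by apply/eqP => e; move: wI; rewrite e (imset_f f0 iU0).
Qed.

Lemma W_sep (a b : nat) (A : {set 'I_a * 'I_b}) (s : {perm 'I_b}) :
  (forall j, #|col A j| + #|col A (s j)| <= a) -> self_separable (wreath_imprim a b) A.
Proof.
move=> hs.
pose P j (f : {perm 'I_a}) := [forall i, (i \in col A j) ==> (f i \notin col A (s j))].
pose F j := odflt 1%g [pick f | P j f].
have hF : forall j i, i \in col A j -> F j i \notin col A (s j).
  move=> j i; rewrite /F; case: pickP => [f /forallP Pf | none] /=.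
    by move=> iA; have := Pf i; rewrite iA.
  have hc : #|col A j| + #|col A (s j)| <= #|'I_a| by rewrite card_ord.
  have [f hf] := @blockperm _ _ (col A j) (col A (s j)) erefl hc.
  by have := none f; rewrite /P; move/negP; case; apply/forallP => i'; apply/implyP; apply: hf.
pose g (x : 'I_a * 'I_b) := (F x.2 x.1, s x.2).
have ginj : injective g.
  move=> [i j] [i' j'] [] /= e1 /perm_inj e2; subst j'.
  by move/perm_inj: e1 => ->.
apply/existsP; exists (perm ginj); apply/andP; split.
  rewrite inE; apply/existsP; exists [ffun j => F j]; apply/existsP; exists s.
  by apply/forallP => x; rewrite permE /g ffunE.
apply/eqP/setP => [[i' j']]; rewrite !inE; apply/negP => /andP[hA /imsetP[[i j] hij]].
rewrite permE /g /= => -[e1 e2]; subst.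
have : i \in col A j by rewrite inE.
by move/hF; rewrite inE hA.
Qed.

Lemma W_nonsep (a b : nat) (A : {set 'I_a * 'I_b}) :
  (forall s : {perm 'I_b}, exists j, a < #|col A j| + #|col A (s j)|) ->
  ~~ self_separable (wreath_imprim a b) A.
Proof.
move=> H; apply/existsP => -[p /andP[]].
rewrite inE => /existsP[f /existsP[s /forallP hp]] /eqP E.
have [j hj] := H s.
set X := [set f j i | i in col A j].
have cX : #|X| = #|col A j| by rewrite card_imset //; apply: perm_inj.
have : 0 < #|X :&: col A (s j)|.
  have := cardsU X (col A (s j)).
  have : #|X :|: col A (s j)| <= a.
    by apply: leq_trans (max_card _) _; rewrite card_ord.
  lia.
rewrite card_gt0 => /set0Pn[i' ]; rewrite !inE => /andP[/imsetP[i iA ->] hA].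
have : (f j i, s j) \in A :&: [set p y | y in A].
  rewrite !inE hA /=; apply/imsetP; exists (i, j); first by move: iA; rewrite inE.
  by apply/eqP; rewrite eq_sym (hp (i, j)).
by rewrite E inE.
Qed.

Lemma mX_le (T : finType) (X : {set {perm T}}) (A : {set T}) :
  ~~ self_separable X A -> mX X <= #|A|.
Proof.
move=> h; rewrite /mX.
have : A \in index_enum {set T} by rewrite mem_index_enum.
elim: (index_enum {set T}) => // y r IH; rewrite inE big_cons.
case/orP => [/eqP <- | /IH hr]; first by rewrite h geq_minl.
by case: ifP => // _; rewrite geq_min hr orbT.
Qed.

Lemma mX_ge (T : finType) (X : {set {perm T}}) n :
  n <= #|T| -> (forall A : {set T}, #|A| < n -> self_separable X A) -> n <= mX X.
Proof.
move=> hn H; rewrite /mX; apply: (big_ind (fun v => n <= v)) => //.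
  by move=> u v hu hv; rewrite leq_min hu hv.
move=> A /negP hA; rewrite leqNgt; apply/negP => /H; exact: hA.
Qed.

Lemma part2 (T : finType) (G : {group {perm T}}) (P : {set {set T}}) (a b : nat) :
  2 <= a -> 2 <= b -> block_system G P a b -> mX G <= a + b - 1.
Proof.
move=> a2 b2 [_ hP hsz hinv].
have : 0 < #|P| by lia.
rewrite card_gt0 => /set0Pn[B0 B0P].
have : 0 < #|B0| by rewrite hsz //; lia.
rewrite card_gt0 => /set0Pn[x0 x0B].
pose rep (B : {set T}) := odflt x0 [pick x in B].
have repP : forall B, B \in P -> rep B \in B.
  move=> B BP; rewrite /rep; case: pickP => [x xB // | none] /=.
  have : 0 < #|B| by rewrite hsz //; lia.
  by rewrite card_gt0 => /set0Pn[y yB]; have := none y; rewrite yB.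
set A := B0 :|: [set rep B | B in P :\ B0].
apply: (@leq_trans #|A|).
  apply: mX_le; apply/existsP => -[g /andP[gG /eqP E]].
  have B'P := hinv g B0 gG B0P.
  set B' := [set g y | y in B0] in B'P.
  have rA : rep B' \in A.
    have [e|ne] := eqVneq B' B0.
      by rewrite inE; apply/orP; left; rewrite -[in X in _ \in X]e; apply: repP.
    by rewrite inE; apply/orP; right; apply/imsetP; exists B' => //; rewrite !inE ne.
  have rgA : rep B' \in [set g y | y in A].
    have : B' \subset [set g y | y in A] by apply: imsetS; apply: subsetUl.
    by move/subsetP; apply; apply: repP.
  have : rep B' \in A :&: [set g y | y in A] by rewrite inE rA rgA.
  by rewrite E inE.
apply: leq_trans (leq_card_setU _ _).1 _.
rewrite hsz //.
have : #|[set rep B | B in P :\ B0]| <= #|P :\ B0| := leq_imset_card _ _.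
have := cardsD1 B0 P; rewrite B0P add1n.
rewrite -hP /=; lia.
Qed.

Theorem theoremE (a b : nat) : 2 <= a -> 2 <= b ->
  mX (wreath_imprim a b) =
    (if ((a == 3) && odd b) || ((b == 3) && odd a) then a + b - 2 else a + b - 1)
  /\
  (forall (T : finType) (G : {group {perm T}}) (P : {set {set T}}),
     [transitive G, on [set: T] | 'P] ->
     block_system G P a b ->
     mX G <= a + b - 1).
Proof.
move=> a2 b2; split; last by move=> T G P _; apply: part2.
set sp := (_ || _).
have ea := odd_double_half a; have eb := odd_double_half b.
rewrite -muln2 in ea; rewrite -muln2 in eb.
have oa : odd a <= 1 by case: (odd a).
have ob : odd b <= 1 by case: (odd b).
apply/eqP; rewrite eqn_leq; apply/andP; split.
- case spE: sp.
  +
    set h := a./2.+1; set m := b./2.+1.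
    have ha : h <= a by rewrite /h; lia.
    have hb : m <= b by rewrite /m; lia.
    set A1 := [set x : 'I_a * 'I_b | (x.1 < h) && (x.2 < m)].
    have colA : forall j : 'I_b, #|col A1 j| = h * (j < m).
      move=> j; case jm: (j < m); last first.
        rewrite muln0; apply/eqP; rewrite cards_eq0; apply/eqP/setP => i.
        by rewrite !inE /= jm andbF.
      rewrite muln1 -(card_lt a h ha); apply: eq_card => i; by rewrite !inE /= jm andbT.
    apply: (@leq_trans #|A1|).
      apply: mX_le; apply: W_nonsep => s.
      have : ~~ [forall j : 'I_b, (j < m) ==> (m <= s j)].
        apply/negP => /forallP hall.
        pose J := [set j : 'I_b | j < m].
        have sub : [set s j | j in J] \subset ~: J.
          apply/subsetP => k /imsetP[j]; rewrite !inE => jm ->.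
          by have := hall j; rewrite jm /= => hj; rewrite -leqNgt.
        have c1 : #|J| <= #|~: J|.
          by rewrite -(card_imset J (@perm_inj _ s)); exact: subset_leq_card sub.
        have c2 : #|J| + #|~: J| = b by rewrite cardsC card_ord.
        have cJ : #|J| = m by rewrite card_lt.
        rewrite /m in cJ; lia.
      rewrite negb_forall => /existsP[j]; rewrite negb_imply -ltnNge => /andP[jm sjm].
      exists j; rewrite !colA jm sjm /h; lia.
    rewrite cardA.
    under eq_bigr => j _ do rewrite colA.
    rewrite sum_ind.
    have -> : [set i : 'I_b | i < m] = [set i : 'I_b | i < m] by [].
    rewrite card_lt //.
    move: spE; rewrite /sp /h /m.
    case/orP => /andP[/eqP e o]; subst; rewrite o /= in eb ea *; lia.
  +
    have a0 : 0 < a by lia.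
    have b0 : 0 < b by lia.
    pose i0 : 'I_a := Ordinal a0.
    pose j0 : 'I_b := Ordinal b0.
    set A0 := [set x : 'I_a * 'I_b | (x.2 == j0) || (x.1 == i0)].
    apply: (@leq_trans #|A0|).
      apply: mX_le; apply: W_nonsep => s; exists j0.
      have -> : #|col A0 j0| = a.
        have -> : col A0 j0 = setT by apply/setP => i; rewrite !inE eqxx.
        by rewrite cardsT card_ord.
      have : 0 < #|col A0 (s j0)| by apply/card_gt0P; exists i0; rewrite !inE eqxx orbT.
      lia.
    rewrite cardA.
    apply: (@leq_trans (\sum_j ((a - 1) * (j == j0) + 1))).
      apply: leq_sum => j _.
      have [->|ne] := eqVneq j j0.
        by rewrite muln1; have := max_card (col A0 j0); rewrite card_ord; lia.
      rewrite muln0 add0n -(cards1 i0); apply: subset_leq_card; apply/subsetP => i.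
      by rewrite !inE /= (negbTE ne).
    rewrite big_split /= sum_ind sum1_card card_ord.
    have -> : [set i : 'I_b | i == j0] = [set j0] by apply/setP => i; rewrite !inE.
    rewrite cards1; lia.
-
  apply: mX_ge.
    rewrite card_prod !card_ord; case: sp; nia.
  move=> A hA.
  pose c j := #|col A j|.
  have cle : forall j, c j <= a by move=> j; have := max_card (col A j); rewrite card_ord.
  have HC : forall x y, a < x + y ->
      #|[set i in [set: 'I_b] | x <= c i]| + #|[set i in [set: 'I_b] | y <= c i]| <= #|[set: 'I_b]|.
    move=> x y hxy.
    have E : forall z, [set i in [set: 'I_b] | z <= c i] = [set i | z <= c i].
      by move=> z; apply/setP => i; rewrite !inE.
    rewrite !E cardsT card_ord leqNgt; apply/negP => hgt.
    wlog yx : x y hxy hgt / y <= x.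
      move=> W; case: (leqP y x) => h; first exact: (W x y).
      apply: (W y x); lia.
    have b2' : 2 <= #|'I_b| by rewrite card_ord.
    have hgt' : #|'I_b| < #|[set i | x <= c i]| + #|[set i | y <= c i]| by rewrite card_ord.
    have := @sum_bound 'I_b c a x y a2 b2' cle hxy yx hgt'.
    rewrite card_ord -cardA.
    move: hA; rewrite /sp; case: ifP => _; lia.
  have [s [hs _ _]] := @matching _ c a _ [set: 'I_b] erefl HC.
  by apply: (@W_sep a b A s) => j; apply: hs; rewrite inE.
Qed.
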